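(* Let $n$ be a positive integer, let $\mathcal F$ be an $\mathcal N$-saturated family of subsets of $[n]$, and let $A_1,\dots,A_k$ and $B_1,\dots,B_l$ be sets in $\mathcal F$, where $k,l\ge1$, such that $\bigcup_{i=1}^l B_i\subseteq\bigcap_{i=1}^k A_i$. Then there exists $M\in\mathcal F$ such that $\bigcup_{i=1}^l B_i\subseteq M\subseteq\bigcap_{i=1}^k A_i$.
   Context: The poset $\mathcal N$ has four elements $a,b,c,d$ with $a<c$, $b<c$, $b<d$ and no other comparabilities. A family $\mathcal Q$ of sets (ordered by inclusion) contains an induced copy of $\mathcal N$ if there are distinct sets in $\mathcal Q$ whose inclusion relations are exactly those of $a,b,c,d$ above. A family $\mathcal F$ of subsets of $[n]=\{1,\dots,n\}$ is $\mathcal N$-saturated if $\mathcal F$ contains no induced copy of $\mathcal N$, but for every $S\subseteq[n]$ with $S\notin\mathcal F$, the family $\mathcal F\cup\{S\}$ contains an induced copy of $\mathcal N$. *)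

(* Defs.v *)
From mathcomp Require Import all_boot.
Set Implicit Arguments. Unset Strict Implicit. Unset Printing Implicit Defensive.

Definition comparable (T : finType) (X Y : {set T}) : bool :=
  (X \subset Y) || (Y \subset X).

Definition is_induced_N (T : finType) (a b c d : {set T}) : bool :=
  [&& uniq [:: a; b; c; d],
      a \subset c, b \subset c, b \subset d,
      ~~ comparable a b, ~~ comparable a d & ~~ comparable c d].

Definition contains_induced_N (T : finType) (Q : {set {set T}}) : Prop :=
  exists a b c d, [/\ a \in Q, b \in Q, c \in Q, d \in Q & is_induced_N a b c d].

Definition N_saturated (n : nat) (F : {set {set 'I_n}}) : Prop :=
  ~ contains_induced_N F /\
  forall S : {set 'I_n}, S \notin F -> contains_induced_N (S |: F).

(* Main.v *)
Require Import Defs.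
From mathcomp Require Import all_boot.
Set Implicit Arguments. Unset Strict Implicit.

Lemma Nprops (T : finType) (a b c d : {set T}) : is_induced_N a b c d ->
  (a \subset c) /\ (b \subset c) /\ (b \subset d) /\ ~~ (a \subset b) /\
  ~~ (b \subset a) /\ ~~ (a \subset d) /\ ~~ (d \subset a) /\
  ~~ (c \subset d) /\ ~~ (d \subset c).
Proof.
rewrite /is_induced_N /comparable.
case/andP=> _ /andP[h1 /andP[h2 /andP[h3 /andP[h4 /andP[h5 h6]]]]].
move: h4 h5 h6; rewrite !negb_or => /andP[h4 h4'] /andP[h5 h5'] /andP[h6 h6'].
by do !split.
Qed.

Lemma mkN (T : finType) (a b c d : {set T}) :
  a \subset c -> b \subset c -> b \subset d -> ~~ (a \subset b) ->
  ~~ (b \subset a) -> ~~ (a \subset d) -> ~~ (d \subset a) ->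
  ~~ (c \subset d) -> ~~ (d \subset c) -> is_induced_N a b c d.
Proof.
move=> hac hbc hbd nab nba nad nda ncd ndc.
rewrite /is_induced_N /comparable hac hbc hbd !negb_or nab nba nad nda ncd ndc.
rewrite !andbT /= !inE !negb_or.
have ab : a != b by apply/eqP=> E; move: nab; rewrite E subxx.
have ac : a != c by apply/eqP=> E; move: nba; rewrite E hbc.
have ad : a != d by apply/eqP=> E; move: nad; rewrite E subxx.
have bc : b != c by apply/eqP=> E; move: ncd; rewrite -E hbd.
have bd : b != d by apply/eqP=> E; move: ndc; rewrite -E hbc.
have cd : c != d by apply/eqP=> E; move: ncd; rewrite E subxx.
by rewrite ab ac ad bc bd cd.
Qed.

Lemma noN (T : finType) (F : {set {set T}}) (a b c d : {set T}) :
  ~ contains_induced_N F -> a \in F -> b \in F -> c \in F -> d \in F ->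
  a \subset c -> b \subset c -> b \subset d -> ~~ (a \subset b) ->
  ~~ (b \subset a) -> ~~ (a \subset d) -> ~~ (d \subset a) ->
  ~~ (c \subset d) -> ~~ (d \subset c) -> False.
Proof.
move=> hF Ha Hb Hc Hd h1 h2 h3 h4 h5 h6 h7 h8 h9; apply: hF.
exists a, b, c, d; split => //; exact: mkN.
Qed.

Lemma gen (T : finType) (F : {set {set T}}) (I : {set T}) :
  ~ contains_induced_N F ->
  (forall S, S \notin F -> contains_induced_N (S |: F)) ->
  (forall x, x \notin I -> exists2 Y, Y \in F & (I \subset Y) && (x \notin Y)) ->
  forall m U, #|~: U| < m -> U \subset I ->
  (forall x, x \in U -> exists2 X, X \in F & (x \in X) && (X \subset U)) ->
  exists2 M, M \in F & (U \subset M) && (M \subset I).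
Proof.
move=> hF hsat Icl m; elim: m => [|m IH] U // hm UI Ucl.
case UF: (U \in F); first by exists U => //; rewrite subxx UI.
have enlarge : forall e : {set T}, e \in F -> e \subset I -> ~~ (e \subset U) ->
    exists2 M, M \in F & (U \subset M) && (M \subset I).
  move=> e eF eI neU.
  have [|||M MF /andP[h1 h2]] := IH (U :|: e).
  - rewrite -ltnS; apply: leq_trans hm; rewrite ltnS.
    apply: proper_card; rewrite properC; exact: properUl.
  - by rewrite subUset UI eI.
  - move=> x; rewrite in_setU => /orP[xU|xe].
      have [X XF /andP[xX XU]] := Ucl x xU; exists X => //.
      by rewrite xX (subset_trans XU (subsetUl _ _)).
    by exists e => //; rewrite xe subsetUr.
  by exists M => //; rewrite h2 (subset_trans (subsetUl _ _) h1).
have pickX : forall b : {set T}, ~~ (U \subset b) ->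
    exists2 X, X \in F & (X \subset U) && ~~ (X \subset b).
  move=> b nb; have [x xU xb] := subsetPn nb; have [X XF /andP[xX XU]] := Ucl x xU.
  exists X => //; rewrite XU /=; apply/negP => /subsetP/(_ x xX).
  by rewrite (negbTE xb).
have pickY : forall a : {set T}, ~~ (a \subset I) ->
    exists2 Y, Y \in F & (I \subset Y) && ~~ (a \subset Y).
  move=> a na; have [x xa xI] := subsetPn na; have [Y YF /andP[IY xY]] := Icl x xI.
  exists Y => //; rewrite IY /=; apply/negP => /subsetP/(_ x xa).
  by rewrite (negbTE xY).
have [a [b [c [d [Ha Hb Hc Hd HN]]]]] := hsat U (negbT UF).
move: Ha Hb Hc Hd HN; rewrite !inE.
case/orP=> [/eqP->|Ha]; case/orP=> [/eqP->|Hb]; case/orP=> [/eqP->|Hc];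
  case/orP=> [/eqP->|Hd] HN;
  try by (move: HN; rewrite /is_induced_N /= !inE !eqxx /= ?orbT ?andbF).
-
  have [hUc [hbc [hbd [nUb [nbU [nUd [ndU [ncd ndc]]]]]]]] := Nprops HN.
  exfalso.
  have [X1 X1F /andP[X1U nX1b]] := pickX _ nUb.
  have ndX : forall X : {set T}, X \subset U -> ~~ (d \subset X).
    by move=> X XU; apply/negP => h; move: ndU; rewrite (subset_trans h XU).
  have nbX : forall X : {set T}, X \subset U -> ~~ (b \subset X).
    by move=> X XU; apply/negP => h; move: nbU; rewrite (subset_trans h XU).
  case X1d: (X1 \subset d); last first.
    apply: (noN hF X1F Hb Hc Hd) => //.
    - exact: subset_trans X1U hUc.
    - exact: nbX.
    - by rewrite X1d.
    - exact: ndX.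
  have [X2 X2F /andP[X2U nX2d]] := pickX _ nUd.
  case X2b: (X2 \subset b); last first.
    apply: (noN hF X2F Hb Hc Hd) => //.
    - exact: subset_trans X2U hUc.
    - by rewrite X2b.
    - exact: nbX.
    - exact: ndX.
  apply: (noN hF X2F X1F Hc Hd) => //.
  - exact: subset_trans X2U hUc.
  - exact: subset_trans X1U hUc.
  - by apply/negP=> h; move: nX2d; rewrite (subset_trans h X1d).
  - by apply/negP=> h; move: nX1b; rewrite (subset_trans h X2b).
  - exact: ndX.
-
  have [hac [hUc [hUd [naU [nUa [nad [nda [ncd ndc]]]]]]]] := Nprops HN.
  exfalso.
  have [X XF /andP[XU nXa]] := pickX _ nUa.
  apply: (noN hF Ha XF Hc Hd) => //.
  - exact: subset_trans XU hUc.
  - exact: subset_trans XU hUd.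
  - by apply/negP=> h; move: naU; rewrite (subset_trans h XU).
-
  have [haU [hbU [hbd [nab [nba [nad [nda [nUd ndU]]]]]]]] := Nprops HN.
  case dI: (d \subset I); first exact: (enlarge _ Hd dI ndU).
  have [Y YF /andP[IY ndY]] := pickY _ (negbT dI).
  have UY := subset_trans UI IY.
  exfalso; apply: (noN hF Ha Hb YF Hd) => //.
  - exact: subset_trans haU UY.
  - exact: subset_trans hbU UY.
  - by apply/negP=> h; move: nUd; rewrite (subset_trans UY h).
-
  have [hac [hbc [hbU [nab [nba [naU [nUa [ncU nUc]]]]]]]] := Nprops HN.
  case aI: (a \subset I); first exact: (enlarge _ Ha aI naU).
  have [Y YF /andP[IY naY]] := pickY _ (negbT aI).
  have UY := subset_trans UI IY.
  exfalso; apply: (noN hF Ha Hb Hc YF) => //.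
  - exact: subset_trans hbU UY.
  - by apply/negP=> h; move: nUa; rewrite (subset_trans UY h).
  - by apply/negP=> h; move: naY; rewrite (subset_trans hac h).
  - by apply/negP=> h; move: nUc; rewrite (subset_trans UY h).
- exfalso; apply: hF; by exists a, b, c, d.
Qed.

Theorem lemma2p3 (n : nat) (F : {set {set 'I_n}}) (k l : nat)
    (A : 'I_k -> {set 'I_n}) (B : 'I_l -> {set 'I_n}) :
  0 < n -> N_saturated F -> 0 < k -> 0 < l ->
  (forall i, A i \in F) -> (forall j, B j \in F) ->
  (\bigcup_(j < l) B j) \subset (\bigcap_(i < k) A i) ->
  exists2 M, M \in F &
    ((\bigcup_(j < l) B j) \subset M) && (M \subset \bigcap_(i < k) A i).
Proof.
move=> _ [hF hsat] _ _ HA HB UI.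
apply: (@gen _ _ _ hF hsat _ _ _ (ltnSn _) UI).
- move=> x xI.
  have : ~~ [forall i, x \in A i].
    apply/negP=> /forallP H; move: xI; apply/negP; rewrite negbK.
    by apply/bigcapP => i _; exact: H i.
  case/forallPn=> i xAi; exists (A i) => //.
  by rewrite xAi andbT; apply: (bigcap_inf i).
- move=> x /bigcupP[j _ xB]; exists (B j) => //.
  by rewrite xB; apply: (bigcup_sup j).
Qed.
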